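(* Let $V^1$ and $V^2$ be $\mathbb{Q}$-VASRs of dimensions $d$ and $e$ respectively, and let $T\in\mathbb{Q}^{e\times d}$ be a matrix such that $V^1\Vdash_T V^2$. Then $T$ is coherent with respect to $V^1$.
   Context: A $\mathbb{Q}$-VASR of dimension $d$ is a finite set $V\subseteq\{0,1\}^d\times\mathbb{Q}^d$ of transformers $(\vec r,\vec a)$ (reset vector $\vec r$, addition vector $\vec a$); it defines the transition system on $\mathbb{Q}^d$ with $\vec u\to_V\vec v$ iff $\vec v=\vec r*\vec u+\vec a$ for some $(\vec r,\vec a)\in V$, where $*$ is the pointwise product. $V^1\Vdash_TV^2$ means $T$ is a linear simulation: for all $\vec u,\vec v\in\mathbb{Q}^d$ with $\vec u\to_{V^1}\vec v$ we have $T\vec u\to_{V^2}T\vec v$. Dimensions $i,j\in\{1,\dots,d\}$ are coherent dimensions of $V$ if $r_i=r_j$ for every $(\vec r,\vec a)\in V$; this is an equivalence relation whose classes are the coherence classes of $V$. A matrix $T\in\mathbb{Q}^{e\times d}$ is coherent with respect to $V$ iff each of its rows has nonzero entries only in columns belonging to a single coherence class of $V$. *)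

(* Defs.v *)
From mathcomp Require Import all_boot all_order all_algebra.
Set Implicit Arguments. Unset Strict Implicit. Unset Printing Implicit Defensive.
Import GRing.Theory Num.Theory.
Local Open Scope ring_scope.

(* A transformer of dimension d: reset vector r in {0,1}^d (as booleans,
   true = 1, false = 0) and addition vector a in Q^d (column vectors). *)
Definition transformer (d : nat) : Type := ('cV[bool]_d * 'cV[rat]_d)%type.

Definition QVASR (d : nat) : Type := seq (transformer d).

Definition rmul (d : nat) (r : 'cV[bool]_d) (u : 'cV[rat]_d) : 'cV[rat]_d :=
  \col_i ((r i 0 : nat)%:R * u i 0).

Definition step (d : nat) (V : QVASR d) (u v : 'cV[rat]_d) : Prop :=
  exists2 t, t \in V & v = rmul t.1 u + t.2.

Definition simulates (d e : nat) (V1 : QVASR d) (T : 'M[rat]_(e, d))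
    (V2 : QVASR e) : Prop :=
  forall u v : 'cV[rat]_d, step V1 u v -> step V2 (T *m u) (T *m v).

Definition coherent_dims (d : nat) (V : QVASR d) (i j : 'I_d) : Prop :=
  forall t, t \in V -> t.1 i 0 = t.1 j 0.

(* T is coherent w.r.t. V: the nonzero entries of each row lie in columns of
   a single coherence class, i.e. any two such columns are coherent. *)
Definition coherent_mx (d e : nat) (V : QVASR d) (T : 'M[rat]_(e, d)) : Prop :=
  forall (k : 'I_e) (j1 j2 : 'I_d),
    T k j1 != 0 -> T k j2 != 0 -> coherent_dims V j1 j2.

(* Main.v *)
Require Import Defs.
From mathcomp Require Import all_boot all_order all_algebra.
From mathcomp Require Import lra.
Set Implicit Arguments. Unset Strict Implicit. Unset Printing Implicit Defensive.
Import Order.TTheory GRing.Theory Num.Theory.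
Local Open Scope ring_scope.

Lemma sum_bound (X : eqType) (s : seq X) (f : X -> rat) (x : X) :
  x \in s -> `|f x| <= \sum_(y <- s) `|f y|.
Proof.
elim: s => [//|z s IH]; rewrite in_cons big_cons => /orP [/eqP ->|/IH H].
  by rewrite lerDl sumr_ge0.
by apply: le_trans H _; rewrite lerDr.
Qed.

Lemma arith (M c a S : rat) (b : bool) :
  M = 1 + `|c| + S -> `|a| <= S -> M + c = b%:R * (M + M) + a -> False.
Proof.
move=> hM ha.
have hc1 := ler_norm c. have hc2 : - c <= `|c| by rewrite -normrN ler_norm.
have ha1 := ler_norm a. have ha2 : - a <= `|a| by rewrite -normrN ler_norm.
case: b => /=; lra.
Qed.

Lemma key (d e : nat) (V1 : QVASR d) (V2 : QVASR e) (T : 'M[rat]_(e, d))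
  (k : 'I_e) (j1 j2 : 'I_d) (t : transformer d) :
  simulates V1 T V2 -> T k j1 != 0 -> T k j2 != 0 -> t \in V1 ->
  t.1 j1 0 = true -> t.1 j2 0 = false -> False.
Proof.
move=> HS H1 H2 Ht r1 r2.
have nj : j1 != j2 by apply/eqP => E; rewrite E r2 in r1.
set c := (T *m t.2) k 0.
set M := 1 + `|c| + \sum_(t' <- V2) `|t'.2 k 0|.
set x := M / T k j1. set y := M / T k j2.
set u : 'cV[rat]_d := x *: delta_mx j1 0 + y *: delta_mx j2 0.
have Hr : rmul t.1 u = x *: delta_mx j1 0.
  apply/matrixP => i l; rewrite !mxE (ord1 l) /= eqxx !andbT.
  case: (eqVneq i j1) => [->|ne1]; first by rewrite r1 (negbTE nj) /=; lra.
  case: (eqVneq i j2) => [->|ne2]; first by rewrite r2 /=; lra.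
  by rewrite /=; lra.
have [t' Ht' Heq] := HS u _ (ex_intro2 _ _ t Ht erefl).
have := congr1 (fun m : 'cV[rat]_e => m k 0) Heq.
rewrite Hr mulmxDr -scalemxAr -colE /u mulmxDr -!scalemxAr -!colE.
rewrite [(_ + T *m t.2) k 0]mxE -/c; clearbody c; rewrite !mxE /=.
have ex : x * T k j1 = M by rewrite /x mulfVK.
have ey : y * T k j2 = M by rewrite /y mulfVK.
rewrite ex ey -/c.
have hb := sum_bound (fun t0 : transformer e => t0.2 k 0) Ht'.
by apply: arith; [reflexivity| exact hb].
Qed.

Theorem lemma1 (d e : nat) (V1 : QVASR d) (V2 : QVASR e) (T : 'M[rat]_(e, d)) :
  simulates V1 T V2 -> coherent_mx V1 T.
Proof.
move=> HS k j1 j2 H1 H2 t Ht.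
case E1: (t.1 j1 0); case E2: (t.1 j2 0) => //.
  by case: (key HS H1 H2 Ht E1 E2).
by case: (key HS H2 H1 Ht E2 E1).
Qed.
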